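(* For every non-binary phylogenetic tree $T$ with $n$ leaves there exists a binary phylogenetic tree $T'$ with $n$ leaves such that $\Phi(T')>\Phi(T)$.
   Context: A phylogenetic tree with $n$ leaves is a rooted tree whose leaves are bijectively labeled by $\{1,\dots,n\}$, every internal node having at least two children; it is binary if every internal node has exactly two children. The depth $\delta_T(v)$ is the number of arcs from the root to $v$; for leaves $i,j$, $\varphi_T(i,j)=\delta_T(LCA_T(i,j))$ ($LCA$ = lowest common ancestor), and $\Phi(T)=\sum_{1\le i<j\le n}\varphi_T(i,j)$ is the total cophenetic index. *)

(* Defs.v *)
From mathcomp Require Import all_boot.
Set Implicit Arguments. Unset Strict Implicit. Unset Printing Implicit Defensive.

(* Rooted trees: a leaf carries a label, an internal node has an ordered
   list of children (the order is irrelevant for everything below). *)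
Inductive tree : Type := Leaf of nat | Node of seq tree.

Fixpoint leaves (t : tree) : seq nat :=
  match t with
  | Leaf a => [:: a]
  | Node ts => flatten (map leaves ts)
  end.

Fixpoint internal_ge2 (t : tree) : bool :=
  match t with
  | Leaf _ => true
  | Node ts => (1 < size ts) && all internal_ge2 ts
  end.

Fixpoint binary (t : tree) : bool :=
  match t with
  | Leaf _ => true
  | Node ts => (size ts == 2) && all binary ts
  end.

Definition phylo (n : nat) (t : tree) : bool :=
  internal_ge2 t && perm_eq (leaves t) (iota 1 n).

(* varphi_T(i,j) = depth of LCA_T(i,j): descend from the root into the
   (unique, labels being distinct) child containing both leaves i and j,
   counting arcs, until no child contains both. *)
Fixpoint lca_depth (t : tree) (i j : nat) : nat :=
  match t with
  | Leaf _ => 0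
  | Node ts =>
      foldr (fun c acc =>
               if (i \in leaves c) && (j \in leaves c)
               then (lca_depth c i j).+1 else acc) 0 ts
  end.

Definition Phi (n : nat) (t : tree) : nat :=
  \sum_(1 <= j < n.+1) \sum_(1 <= i < j) lca_depth t i j.

(* Main.v *)
Require Import Defs.
From mathcomp Require Import all_boot.
From mathcomp Require Import zify.
From Stdlib Require List.

Set Implicit Arguments. Unset Strict Implicit. Unset Printing Implicit Defensive.

Section Aux.

Definition tree_ind' (P : tree -> Prop) (HL : forall a, P (Leaf a))
  (HN : forall ts, (forall t, List.In t ts -> P t) -> P (Node ts)) : forall t, P t :=
  fix F t := match t with
  | Leaf a => HL a
  | Node ts => HN ts ((fix G (ts : list tree) : forall t, List.In t ts -> P t :=
        match ts with
        | nil => fun t H => False_ind _ H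
        | cons x r => fun t H => match H with
                       | or_introl e => eq_ind x P (F x) t e
                       | or_intror H' => G r t H'
                       end
        end) ts)
  end.

Fixpoint comb (l : seq tree) : tree :=
  match l with
  | nil => Node nil
  | t :: r => match r with nil => t | _ => Node [:: t; comb r] end
  end.

Fixpoint bin (t : tree) : tree :=
  match t with
  | Leaf a => Leaf a
  | Node ts => comb (map bin ts)
  end.

Lemma In_all (p : tree -> bool) l x : List.In x l -> all p l -> p x.
Proof. elim: l => //= a l IH [-> /andP[]//|H /andP[_ H2]]; exact: IH. Qed.

Lemma leaves_comb l : leaves (comb l) = flatten (map leaves l).
Proof.
elim: l => //= a [|b r] IH /=; first by rewrite cats0.
by rewrite cats0 IH.
Qed.

Lemma leaves_bin t : leaves (bin t) = leaves t.
Proof.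
elim/tree_ind': t => //= ts IH.
rewrite leaves_comb; congr flatten.
elim: ts IH => //= a l IHl H.
by rewrite H; [rewrite IHl // => t Ht; apply: H; right|left].
Qed.

Lemma binary_comb l : 1 < size l -> all binary l -> binary (comb l).
Proof.
elim: l => //= a [|b r] IH //= _ /andP[Ha Hr].
case: r IH Hr => [|c r] IH Hr /=; first by rewrite Ha /= andbT; case/andP: Hr.
by rewrite Ha /=; move: (IH isT Hr) => /= ->.
Qed.

Lemma binary_bin t : internal_ge2 t -> binary (bin t).
Proof.
elim/tree_ind': t => //= ts IH /andP[Hs Ha].
apply: binary_comb; first by rewrite size_map.
elim: ts IH Ha {Hs} => //= a l IHl H /andP[Ha Hl].
rewrite (H a (or_introl erefl) Ha) /=.
by apply: IHl => // t Ht; apply: H; right.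
Qed.

Lemma binary_ge2 t : binary t -> internal_ge2 t.
Proof.
elim/tree_ind': t => //= ts IH /andP[/eqP Hs Ha].
rewrite Hs /=.
elim: ts IH Ha {Hs} => //= a l IHl H /andP[Ha Hl].
rewrite (H a (or_introl erefl) Ha) /=.
by apply: IHl => // t Ht; apply: H; right.
Qed.

Lemma lca_sym t i j : lca_depth t i j = lca_depth t j i.
Proof.
elim/tree_ind': t => //= ts IH.
elim: ts IH => //= a l IHl H.
rewrite andbC H; last by left.
by rewrite IHl // => t Ht; apply: H; right.
Qed.

Lemma lca_pos l i j : 0 < lca_depth (Node l) i j ->
  (i \in leaves (Node l)) && (j \in leaves (Node l)).
Proof.
elim: l => //= a l IH; rewrite !mem_cat.
case: ifP => [/andP[-> ->]//|_ /IH /andP[-> ->]]; by rewrite !orbT.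
Qed.

Lemma comb2 a b r : comb [:: a, b & r] = Node [:: a; comb (b :: r)].
Proof. by []. Qed.

Lemma lcaN a l i j : lca_depth (Node (a :: l)) i j =
  if (i \in leaves a) && (j \in leaves a) then (lca_depth a i j).+1
  else lca_depth (Node l) i j.
Proof. by []. Qed.

Lemma lca_comb l i j : 1 < size l -> lca_depth (Node l) i j <= lca_depth (comb l) i j.
Proof.
elim: l => // a [|b r] IH // _.
rewrite comb2 !lcaN.
case: ifP => // _.
case: r IH => [|c r] IH; first by [].
have HF := IH erefl.
rewrite -lcaN.
set F := lca_depth (Node [:: b, c & r]) i j in HF *.
case: (posnP F) => [->//|Fp].
have EL : leaves (comb [:: b, c & r]) = leaves (Node [:: b, c & r]) by rewrite leaves_comb.
have := lca_pos Fp; rewrite EL => ->.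
by apply: leq_trans HF _.
Qed.

Lemma lca_map_bin l i j :
  (forall x, List.In x l -> lca_depth x i j <= lca_depth (bin x) i j) ->
  lca_depth (Node l) i j <= lca_depth (Node (map bin l)) i j.
Proof.
elim: l => //= a l IH H; rewrite leaves_bin.
case: ifP => _; first by rewrite ltnS; apply: H; left.
by apply: IH => x Hx; apply: H; right.
Qed.

Lemma lca_bin t i j : internal_ge2 t -> lca_depth t i j <= lca_depth (bin t) i j.
Proof.
elim/tree_ind': t => //= ts IH /andP[Hs Ha].
have H1 := @lca_map_bin ts i j (fun x Hx => IH x Hx (In_all Hx Ha)).
apply: leq_trans H1 _.
by apply: lca_comb; rewrite size_map.
Qed.

Lemma leaves_nonempty t : internal_ge2 t -> exists a, a \in leaves t.
Proof.
elim/tree_ind': t => [a|ts IH] /=; first by exists a; rewrite inE.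
case: ts IH => [|c r] IH //= /andP[_ /andP[Hc _]].
have [a Ha] := IH c (or_introl erefl) Hc.
by exists a; rewrite mem_cat Ha.
Qed.

Lemma split_notall (p : tree -> bool) s : ~~ all p s ->
  exists l1 c l2, s = l1 ++ c :: l2 /\ ~~ p c.
Proof.
elim: s => //= a s IH; case: (boolP (p a)) => Ha /=.
  move/IH => [l1 [c [l2 [-> H]]]]; by exists (a :: l1), c, l2.
by move=> _; exists nil, a, s.
Qed.

Lemma In_flatten l x i : List.In x l -> i \in leaves x -> i \in flatten (map leaves l).
Proof.
elim: l => //= a l IH [->|H] Hi; rewrite mem_cat; first by rewrite Hi.
by rewrite IH // orbT.
Qed.

Lemma uniq_contra (s1 s2 : seq nat) i : uniq (s1 ++ s2) -> i \in s1 -> i \in s2 -> False.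
Proof.
rewrite cat_uniq => /and3P[_ /negP H _] H1 H2; apply: H; apply/hasP; by exists i.
Qed.

Lemma lca_split l1 c l2 i j :
  (forall x, List.In x l1 -> i \notin leaves x) ->
  lca_depth (Node (l1 ++ c :: l2)) i j = lca_depth (Node (c :: l2)) i j.
Proof.
elim: l1 => //= a l IH H.
rewrite (negbTE (H a (or_introl erefl))) /=.
by apply: IH => x Hx; apply: H; right.
Qed.

Lemma lca_zero l i j : i \notin flatten (map leaves l) -> lca_depth (Node l) i j = 0.
Proof.
elim: l => //= a l IH; rewrite mem_cat negb_or => /andP[Ha Hl].
by rewrite (negbTE Ha) /= IH.
Qed.

Lemma strict t : internal_ge2 t -> uniq (leaves t) -> ~~ binary t ->
  exists i j, [/\ i \in leaves t, j \in leaves t, i != j &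
                  lca_depth t i j < lca_depth (bin t) i j].
Proof.
elim/tree_ind': t => [a _ _ //|ts IH] /andP[Hs Ha] Hu.
change (bin (Node ts)) with (comb (map bin ts)).
case: (boolP (size ts == 2)) => Hs2.
- rewrite [binary _]/= Hs2 /= => Hb; have [l1 [c [l2 [Ets Hc]]]] := split_notall Hb.
  have Inc : List.In c ts by rewrite Ets; apply: List.in_or_app; right; left.
  rewrite /= Ets map_cat flatten_cat /= in Hu.
  have Hu' : uniq (leaves c).
    by move: Hu; rewrite cat_uniq => /and3P[_ _]; rewrite cat_uniq => /and3P[].
  rewrite Ets.
  have [i [j [Hi Hj Hij Hlt]]] := IH c Inc (In_all Inc Ha) Hu' Hc.
  have Hl1 : forall x, List.In x l1 -> i \notin leaves x.
    move=> x Hx; apply/negP => Hix.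
    apply: (uniq_contra Hu (In_flatten Hx Hix)); by rewrite mem_cat Hi.
  exists i, j; split => //.
  + by rewrite /= map_cat flatten_cat !mem_cat Hi orbT.
  + by rewrite /= map_cat flatten_cat !mem_cat Hj orbT.
  change (lca_depth (Node (l1 ++ c :: l2)) i j < lca_depth (comb (map bin (l1 ++ c :: l2))) i j).
  rewrite lca_split // lcaN Hi Hj /=.
  apply: leq_trans (lca_comb _ _ _); last by rewrite size_map -Ets.
  rewrite map_cat lca_split; last first.
    move=> x /List.in_map_iff [y [<- Hy]]; rewrite leaves_bin; exact: Hl1.
  by rewrite lcaN leaves_bin Hi Hj /=.
- move=> _.
  case: ts IH Hs Ha Hu Hs2 => [|c0 [|c1 [|c2 r]]] // IH _ Ha Hu _.
  move: Ha => /= /and4P[H0 H1 H2 Hr].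
  rewrite /= in Hu.
  have [i Hi] := leaves_nonempty H1.
  have [j Hj] := leaves_nonempty H2.
  have Hu1 : uniq (leaves c0 ++ leaves c1 ++ leaves c2).
    by move: Hu; rewrite !catA cat_uniq => /andP[]; rewrite -catA.
  have Hu2 : uniq ((leaves c0 ++ leaves c1) ++ leaves c2) by rewrite -catA.
  have Hu3 : uniq (((leaves c0 ++ leaves c1) ++ leaves c2) ++ flatten (map leaves r)) by rewrite -!catA.
  have i0 : i \notin leaves c0.
    apply/negP => H; apply: (uniq_contra Hu1 H); by rewrite mem_cat Hi.
  have j1 : j \notin leaves c1.
    apply/negP => H; apply: (uniq_contra Hu2 _ Hj); by rewrite mem_cat H orbT.
  have i2 : i \notin leaves c2.
    apply/negP => H; apply: (uniq_contra Hu2 _ H); by rewrite mem_cat Hi orbT.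
  have ir : i \notin flatten (map leaves r).
    apply/negP => H; apply: (uniq_contra Hu3 _ H); by rewrite !mem_cat Hi orbT.
  have Hij : i != j by apply/negP => /eqP E; move: j1; rewrite -E Hi.
  exists i, j; split => //.
  + by rewrite /= !mem_cat Hi !orbT.
  + by rewrite /= !mem_cat Hj !orbT.
  change (lca_depth (Node [:: c0, c1, c2 & r]) i j <
    lca_depth (Node [:: bin c0; comb [:: bin c1, bin c2 & map bin r]]) i j).
  have -> : lca_depth (Node [:: c0, c1, c2 & r]) i j = 0.
    by rewrite !lcaN (lca_zero j ir) (negbTE i0) (negbTE j1) (negbTE i2) andbF /=.
  rewrite lcaN leaves_bin (negbTE i0) andFb lcaN leaves_comb.
  by rewrite /= !leaves_bin !mem_cat Hi Hj !orbT.
Qed.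

Lemma sum_strict (F G : nat -> nat) m k n : m <= k < n ->
  (forall x, F x <= G x) -> F k < G k ->
  \sum_(m <= x < n) F x < \sum_(m <= x < n) G x.
Proof.
move=> /andP[Hmk Hkn] HFG Hk.
rewrite (big_cat_nat Hmk (ltnW Hkn)) (big_cat_nat Hmk (ltnW Hkn)).
rewrite (big_ltn Hkn) (big_ltn Hkn).
have h1 : \sum_(m <= x < k) F x <= \sum_(m <= x < k) G x by apply: leq_sum.
have h2 : \sum_(k.+1 <= x < n) F x <= \sum_(k.+1 <= x < n) G x by apply: leq_sum.
rewrite -addnS; apply: leq_add h1 _; rewrite -addSn; exact: leq_add Hk h2.
Qed.

End Aux.

Theorem mainTheorem5 (n : nat) (T : tree) :
  phylo n T -> ~~ binary T ->
  exists T' : tree, [/\ phylo n T', binary T' & Phi n T < Phi n T'].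
Proof.
move=> /andP[Hg Hp] Hb.
have Hu : uniq (leaves T) by rewrite (perm_uniq Hp) iota_uniq.
have [i [j [Hi Hj Hij Hlt]]] := strict Hg Hu Hb.
exists (bin T); split.
- by rewrite /phylo binary_ge2 ?binary_bin // leaves_bin.
- exact: binary_bin.
have Hi' : i \in iota 1 n by rewrite -(perm_mem Hp).
have Hj' : j \in iota 1 n by rewrite -(perm_mem Hp).
move: Hi' Hj'; rewrite !mem_iota => Hi' Hj'.
have key : forall a b, 1 <= a < b -> b < n.+1 ->
    lca_depth T a b < lca_depth (bin T) a b -> Phi n T < Phi n (bin T).
  move=> a b Hab Hb' Hlt'; rewrite /Phi.
  apply: (sum_strict (k := b)); first by apply/andP; split; lia.
  + move=> x; apply: leq_sum => y _; exact: lca_bin.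
  apply: (sum_strict (k := a)) => // y; exact: lca_bin.
case: (ltngtP i j) => Hc.
- apply: (key i j) => //; lia.
- apply: (key j i); [lia|lia|by rewrite lca_sym (lca_sym (bin T))].
- by rewrite Hc eqxx in Hij.
Qed.
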